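(* Let $\{P_v\}_{v\in\mathcal{V}}$ be a family of distributions indexed by $\mathcal{V}=\{0,1\}^\infty$, let $\alpha\in[0,1)$, and let $\hat V$ be an $(\alpha,\{n_k\})$-test sequence for this family. Then for all $v\in\mathcal{V}$, $$\sum_{k=1}^\infty\mathsf{CondErr}(\hat V,v,k)\le\frac{\alpha}{1-\alpha}.$$
   Context: $\mathbb{P}_v$ denotes the probability under which $X_1,X_2,\dots$ are i.i.d. $P_v$. A sequence of $\{0,1\}$-valued tests $\{\hat V_k\}$, $\hat V_k$ a function of $X_{1:n_k}$, is an $(\alpha,\{n_k\})$-test if for all $v\in\mathcal{V}$, $\mathbb{P}_v(\hat V_k(X_{1:n_k})=v_k\text{ for all }k\in\mathbb{N})\ge1-\alpha$. $\mathsf{CondErr}(\hat V,v,k):=\mathbb{P}_v(\hat V_k\ne v_k\mid\hat V_{1:k-1}=v_{1:k-1})$, where $v_{1:k-1}=(v_1,\dots,v_{k-1})$. *)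

(* Defs.v *)
From HB Require Import structures.
From mathcomp Require Import all_boot all_order all_algebra.
From mathcomp Require Import all_classical all_reals all_analysis.
Set Implicit Arguments. Unset Strict Implicit. Unset Printing Implicit Defensive.
Import Order.TTheory GRing.Theory Num.Theory.
Local Open Scope classical_set_scope.
Local Open Scope ring_scope.

Section Defs.
Context {d dX : measure_display} {Omega : measurableType d}
  {X : measurableType dX} {R : realType}.

(* X_{1:n}(omega) : the first n observations (indices 0..n-1). *)
Definition window (Xs : nat -> Omega -> X) (n : nat) (w : Omega) : 'I_n -> X :=
  fun i => Xs (nat_of_ord i) w.

Definition iid_under (Q : probability Omega R) (Xs : nat -> Omega -> X)
  (P : probability X R) : Prop :=
  (forall i, measurable_fun setT (Xs i)) /\
  forall (n : nat) (A : nat -> set X), (forall i, measurable (A i)) ->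
    Q (\bigcap_(i in `I_n) (Xs i @^-1` A i)) = (\prod_(i < n) P (A i))%E.

Definition test_at (nk : nat -> nat) (V : forall k : nat, ('I_(nk k) -> X) -> bool)
  (Xs : nat -> Omega -> X) (k : nat) (w : Omega) : bool :=
  V k (@window Xs (nk k) w).

Definition is_alpha_test (Q : (nat -> bool) -> probability Omega R)
  (alpha : R) (nk : nat -> nat) (V : forall k : nat, ('I_(nk k) -> X) -> bool)
  (Xs : nat -> Omega -> X) : Prop :=
  forall v : nat -> bool,
    ((1 - alpha)%:E <= Q v [set w | forall k, test_at V Xs k w = v k])%E.

Definition CondErr (Q : probability Omega R)
  (nk : nat -> nat) (V : forall k : nat, ('I_(nk k) -> X) -> bool)
  (Xs : nat -> Omega -> X) (v : nat -> bool) (k : nat) : R :=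
  let B := [set w | forall j, (j < k)%N -> test_at V Xs j w = v j] in
  fine (Q ([set w | test_at V Xs k w != v k] `&` B)) / fine (Q B).

End Defs.

(* Main.v *)
Require Import Defs.
From HB Require Import structures.
From mathcomp Require Import all_boot all_order all_algebra.
From mathcomp Require Import all_classical all_reals all_analysis.
From mathcomp Require Import lra.
Import Order.TTheory GRing.Theory Num.Theory.
Local Open Scope classical_set_scope.
Local Open Scope ring_scope.

Theorem lemma6 (d dX : measure_display) (Omega : measurableType d)
  (X : measurableType dX) (R : realType)
  (P : (nat -> bool) -> probability X R)
  (Q : (nat -> bool) -> probability Omega R)
  (Xs : nat -> Omega -> X)
  (HQ : forall v, iid_under (Q v) Xs (P v))
  (alpha : R) (Ha0 : 0 <= alpha) (Ha1 : alpha < 1)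
  (nk : nat -> nat) (V : forall k : nat, ('I_(nk k) -> X) -> bool)
  (Vmeas : forall k, measurable [set w | test_at V Xs k w])
  (HV : is_alpha_test Q alpha V Xs) :
  forall v : nat -> bool,
    (\sum_(0 <= k <oo) (CondErr (Q v) V Xs v k)%:E <= (alpha / (1 - alpha))%:E)%E.
Proof.
move=> v.
set mu := Q v.
pose E k := [set w | test_at V Xs k w = v k].
pose C k := [set w | test_at V Xs k w != v k].
pose B k := [set w | forall j, (j < k)%N -> test_at V Xs j w = v j].
have mE k : measurable (E k).
  case Hv: (v k).
    suff -> : E k = [set w | test_at V Xs k w] by [].
    by apply/seteqP; split => w; rewrite /E /= Hv => ->.
  suff -> : E k = ~` [set w | test_at V Xs k w] by apply: measurableC.
  apply/seteqP; split => w; rewrite /E /= Hv.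
    by move=> ->.
  by case: (test_at V Xs k w).
have mC k : measurable (C k).
  suff -> : C k = ~` E k by apply: measurableC.
  by apply/seteqP; split => w; rewrite /C /E /=; move/eqP.
have BS k : B k.+1 = B k `&` E k.
  apply/seteqP; split => w; rewrite /B /E /=.
    by move=> H; split; [move=> j jk; apply: H; apply: ltnW|apply: H].
  move=> [H1 H2] j; rewrite ltnS leq_eqVlt => /orP [/eqP -> //|]; exact: H1.
have B0 : B 0 = setT by apply/seteqP; split => w //=.
have mB k : measurable (B k).
  elim: k => [|k IH]; first by rewrite B0.
  by rewrite BS; apply: measurableI.
have finm A : measurable A -> mu A \is a fin_num.
  move=> mA; rewrite ge0_fin_numE ?measure_ge0 //.
  by apply: (le_lt_trans (probability_le1 mu mA)); rewrite ltry.
pose q k := fine (mu (B k)).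
pose e k := fine (mu (C k `&` B k)).
have qE k : mu (B k) = (q k)%:E by rewrite fineK // finm.
have eE k : mu (C k `&` B k) = (e k)%:E by rewrite fineK //; apply: finm; apply: measurableI.
have e0 k : 0 <= e k by rewrite -lee_fin -eE measure_ge0.
have qS k : q k = q k.+1 + e k.
  have dec : B k = B k.+1 `|` (C k `&` B k).
    rewrite BS; apply/seteqP; split => w; rewrite /B /C /E /=.
      by move=> Hw; case: (boolP (test_at V Xs k w == v k)) => /eqP H; [left|right].
    by case=> [[]|[]].
  have HU : mu (B k) = (mu (B k.+1) + mu (C k `&` B k))%E.
    rewrite {1}dec; apply: measureU => //; first by apply: measurableI.
    rewrite BS; apply/seteqP; split => w; rewrite /B /C /E /= => //.
    by move=> [[_ H1] [/eqP H2 _]].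
  by move: HU; rewrite !qE eE -EFinD => -[].
have q0 : q 0 = 1 by rewrite /q B0 probability_setT.
have sumE n : \sum_(0 <= k < n) e k = 1 - q n.
  elim: n => [|n IH]; first by rewrite big_geq // q0 subrr.
  by rewrite big_nat_recr //= IH (qS n); lra.
have low n : 1 - alpha <= q n.
  rewrite -lee_fin -qE; apply: (le_trans (HV v)); apply: le_measure; rewrite ?inE.
  - have -> : [set w | forall k, test_at V Xs k w = v k] = \bigcap_k E k.
      by apply/seteqP; split => w; rewrite /E /bigcap /= => H *; apply: H.
    by apply: bigcapT_measurable => k.
  - exact: mB.
  by move=> w /= H j _; apply: H.
have CE k : CondErr mu V Xs v k = e k / q k by [].
have a1 : 0 < 1 - alpha by lra.
have CEle k : CondErr mu V Xs v k <= e k / (1 - alpha).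
  rewrite CE; apply: ler_wpM2l => //; rewrite lef_pV2 ?posrE //.
  exact: (lt_le_trans a1).
have CE0 k : 0 <= CondErr mu V Xs v k.
  by rewrite CE; apply: divr_ge0 => //; apply: (le_trans (ltW a1)).
apply: lime_le.
  by apply: is_cvg_nneseries => n _ _; rewrite lee_fin.
apply: nearW => n.
rewrite sumEFin lee_fin.
apply: (@le_trans _ _ (\sum_(0 <= i < n) (e i / (1 - alpha)))).
  by apply: ler_sum => k _; apply: CEle.
rewrite -mulr_suml sumE ler_pM2r ?invr_gt0 //.
by have := low n; lra.
Qed.
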